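(* Let $L$ be a combinatorial tiling locally isomorphic to $K$, let $v$ be a vertex of $L$ and $n>0$. Let $B_d(v,n,L)$ denote the set of points $u$ of the 1-skeleton of $L_{\mathrm{aff}}$ with $d(v,u)\le n$, and $B_{d'}(v,n,L)$ the set of points $u$ of the 1-skeleton with $d'(v,u)\le n$. Then $B_{d'}(v,n,L)\subset B_d(v,n,L)$ and $B_d(v,n,L)\subset B_{d'}(v,3n,L)$.
   Context: A combinatorial tiling is a 2-dimensional CW-complex homeomorphic to the plane. The combinatorial pentagonal tiling $K$ is built as follows: $K_0$ is a (decorated) combinatorial pentagon, i.e. a space homeomorphic to the closed disk with five distinguished boundary points; the pentagonal subdivision rule $\omega$ replaces each pentagon $t$ by a supertile $\omega(t)$ consisting of six pentagons (a central pentagon surrounded by a ring of five, combinatorially half a dodecahedron), each edge of $t$ being split into two edges, with decorations of the subtiles prescribed by the rule (finitely many decorated prototiles); $K_n:=\omega^n(K_0)$, embeddings $\iota_n:K_n\to K_{n+1}$ send the central pentagon to the central pentagon, and $K:=\varinjlim K_n$. A combinatorial tiling $L$ is locally isomorphic to $K$ if every finite patch of $L$ is isomorphic, via a cell-preserving decoration-preserving isomorphism, to a patch of $K$. For such $L$, $L_{\mathrm{aff}}$ is $L$ with the metric making each edge isometric to $[0,1]$ and each face isometric to a Euclidean regular pentagon of side $1$; $d$ is the length of a shortest path in $L_{\mathrm{aff}}$. The unit-edge metric $d'$ on the 1-skeleton is the length of a shortest path within the 1-skeleton, each edge having length $1$. *)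

(* Defs.v *)
From mathcomp Require Import all_boot.
From Stdlib Require Import Reals List Relations.
Set Implicit Arguments.
Unset Strict Implicit.
Unset Printing Implicit Defensive.

(* Pentagonal 2-complexes: every 2-cell is a combinatorial pentagon   *)
(* whose five distinguished boundary points are its vertices, listed  *)
(* in cyclic order by [pcor f : 'I_5 -> pV].  Edges are the pairs of  *)
(* cyclically consecutive corners of faces.                           *)
Record pcx := PCx { pV : Type; pF : Type; pcor : pF -> 'I_5 -> pV }.

Definition side (X : pcx) (f : pF X) (i : 'I_5) (a b : pV X) : Prop :=
  (pcor f i = a /\ pcor f (ordS i) = b) \/ (pcor f i = b /\ pcor f (ordS i) = a).

Definition side_in (X : pcx) (f : pF X) (a b : pV X) : Prop :=
  exists i, side f i a b.

Definition adj (X : pcx) (a b : pV X) : Prop := exists f, side_in f a b.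

Definition corners_distinct (X : pcx) := forall f : pF X, injective (pcor f).

(* every edge lies on exactly two faces (surface without boundary) *)
Definition edge_two_faces (X : pcx) :=
  forall a b : pV X, adj a b ->
    exists f g, f <> g /\ side_in f a b /\ side_in g a b /\
      forall h, side_in h a b -> h = f \/ h = g.

(* the faces around each vertex form a single finite cycle (disk link) *)
Definition vertex_wheels (X : pcx) :=
  forall (f0 : pF X) (i0 : 'I_5), let v := pcor f0 i0 in
    exists k (fs : 'I_k -> pF X) (ws : 'I_k -> pV X),
      (2 <= k)%nat /\ injective fs /\ injective ws /\
      (forall j, side_in (fs j) v (ws j) /\ side_in (fs j) v (ws (ordS j))) /\
      (forall g i, pcor g i = v -> exists j, fs j = g).

Definition connected_cx (X : pcx) :=
  forall (f g : pF X) i j, clos_refl_trans _ (@adj X) (pcor f i) (pcor g j).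

Fixpoint is_edge_path (X : pcx) (a : pV X) (p : list (pV X)) : Prop :=
  match p with
  | nil => True
  | b :: p' => adj a b /\ is_edge_path b p'
  end.

Definition face_loop (X : pcx) (f : pF X) (i : 'I_5) (dir : bool) : list (pV X) :=
  let nx := if dir then @ordS 5 else @ord_pred 5 in
  [:: pcor f i; pcor f (nx i); pcor f (nx (nx i)); pcor f (nx (nx (nx i)));
      pcor f (nx (nx (nx (nx i)))); pcor f i].

Definition htpy_step (X : pcx) (p q : list (pV X)) : Prop :=
  (exists p1 p2 a b, adj a b /\ p = p1 ++ a :: b :: a :: p2 /\ q = p1 ++ a :: p2)
  \/ (exists p1 p2 f i dir, p = p1 ++ pcor f i :: p2 /\
        q = p1 ++ face_loop f i dir ++ p2).

Definition simply_connected_cx (X : pcx) :=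
  forall (a : pV X) p, is_edge_path a p -> seq.last a p = a ->
    clos_refl_sym_trans _ (@htpy_step X) (a :: p) [:: a].

Definition infinite_cx (X : pcx) := ~ exists s : list (pF X), forall f, In f s.

(* a combinatorial tiling: a pentagonal 2-complex homeomorphic to the plane
   (connected, simply connected, non-compact surface without boundary) *)
Definition comb_tiling (X : pcx) :=
  corners_distinct X /\ edge_two_faces X /\ vertex_wheels X /\
  connected_cx X /\ simply_connected_cx X /\ infinite_cx X.

Record fcx := FCx { fV : finType; fF : finType; fcor : fF -> 'I_5 -> fV }.
Definition to_pcx (X : fcx) : pcx := @PCx (fV X) (fF X) (@fcor X).
Coercion to_pcx : fcx >-> pcx.

Definition subV (X : fcx) : finType := ((fV X + {set fV X}) + (fF X * 'I_5))%type.
Definition subF (X : fcx) : finType := (fF X * 'I_6)%type.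

(* old vertices, edge midpoints (the edge {a,b} is named by its endpoint set),
   and the five new interior vertices of each supertile *)
Definition s_old (X : fcx) (v : fV X) : subV X := inl (inl v).
Definition s_mid (X : fcx) (a b : fV X) : subV X := inl (inr [set a; b]).
Definition s_cen (X : fcx) (f : fF X) (j : 'I_5) : subV X := inr (f, j).

(* omega(t): central pentagon (index 5) with corners c_0..c_4, and for j < 5
   the ring pentagon [c_j; c_{j+1}; m_{j+1}; v_{j+1}; m_j], where v_i are the
   corners of t and m_i the midpoint of its side v_i v_{i+1}: half a dodecahedron
   whose boundary v_0 m_0 v_1 m_1 ... consists of the split sides of t. *)
Definition subcor (X : fcx) (t : subF X) (i : 'I_5) : subV X :=
  let: (f, k) := t in
  let v := fcor f in
  if (k : nat) == 5%nat then s_cen f i else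
  let j : 'I_5 := inord k in
  let m := fun l : 'I_5 => s_mid (v l) (v (ordS l)) in
  match (i : nat) with
  | 0 => s_cen f j
  | 1 => s_cen f (ordS j)
  | 2 => m (ordS j)
  | 3 => s_old (v (ordS j))
  | _ => m j
  end%nat.

Definition subdiv (X : fcx) : fcx := @FCx (subV X) (subF X) (@subcor X).

Definition K0 : fcx := @FCx 'I_5 unit (fun _ i => i).

Fixpoint Kn (n : nat) : fcx :=
  match n with 0 => K0 | n'.+1 => subdiv (Kn n') end.

Definition finite_faces (X : pcx) (P : pF X -> Prop) :=
  exists s : list (pF X), forall f, P f -> In f s.

Definition rot (r i : 'I_5) : 'I_5 := inord ((r + i) %% 5).
Definition refl5 (i : 'I_5) : 'I_5 := inord ((5 - i) %% 5).

(* cell-preserving isomorphism between the patch (finite union of tiles) P of X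
   and the patch Q of Y; pentagons are matched up to a dihedral relabelling of
   their five distinguished points *)
Definition patch_iso (X Y : pcx) (P : pF X -> Prop) (Q : pF Y -> Prop) :=
  exists (phi : pV X -> pV Y) (psi : pF X -> pF Y),
    (forall f, P f -> Q (psi f)) /\
    (forall f g, P f -> P g -> psi f = psi g -> f = g) /\
    (forall g, Q g -> exists f, P f /\ psi f = g) /\
    (forall f g i j, P f -> P g -> phi (pcor f i) = phi (pcor g j) ->
        pcor f i = pcor g j) /\
    (forall f, P f -> exists r : 'I_5,
        (forall i, pcor (psi f) (rot r i) = phi (pcor f i)) \/
        (forall i, pcor (psi f) (rot r (refl5 i)) = phi (pcor f i))).

(* K = lim K_n (with K_n embedded centrally in K_(n+1)); a finite patch of K
   is a finite patch of some K_n *)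
Definition loc_iso_K (L : pcx) :=
  forall P : pF L -> Prop, finite_faces P ->
    exists n (Q : pF (Kn n) -> Prop), patch_iso P Q.

Open Scope R_scope.

Definition pt := (R * R)%type.
Definition circ_rad : R := / (2 * sin (PI / 5)).
(* the vertices of the standard regular pentagon of side 1 *)
Definition pvert (k : 'I_5) : pt :=
  (circ_rad * cos (2 * PI * INR k / 5), circ_rad * sin (2 * PI * INR k / 5)).

Definition in_pent (x : pt) : Prop :=
  exists l : 'I_5 -> R, (forall k, 0 <= l k) /\
    l (inord 0) + l (inord 1) + l (inord 2) + l (inord 3) + l (inord 4) = 1 /\
    x = (l (inord 0) * fst (pvert (inord 0)) + l (inord 1) * fst (pvert (inord 1))
         + l (inord 2) * fst (pvert (inord 2)) + l (inord 3) * fst (pvert (inord 3))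
         + l (inord 4) * fst (pvert (inord 4)),
         l (inord 0) * snd (pvert (inord 0)) + l (inord 1) * snd (pvert (inord 1))
         + l (inord 2) * snd (pvert (inord 2)) + l (inord 3) * snd (pvert (inord 3))
         + l (inord 4) * snd (pvert (inord 4))).

Definition edist (x y : pt) : R :=
  sqrt ((fst x - fst y) ^ 2 + (snd x - snd y) ^ 2).

Definition side_pt (i : 'I_5) (s : R) : pt :=
  ((1 - s) * fst (pvert i) + s * fst (pvert (ordS i)),
   (1 - s) * snd (pvert i) + s * snd (pvert (ordS i))).

(* points of the 1-skeleton: the point at parameter t of the edge from a to b *)
Record skel (X : pcx) := Sk { sa : pV X; sb : pV X; st : R }.

Definition skel_ok (X : pcx) (u : skel X) :=
  adj (sa u) (sb u) /\ 0 <= st u <= 1.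

Definition skel_eq (X : pcx) (u u' : skel X) : Prop :=
  (st u = 0 /\ st u' = 0 /\ sa u = sa u') \/
  (st u = 0 /\ st u' = 1 /\ sa u = sb u') \/
  (st u = 1 /\ st u' = 0 /\ sb u = sa u') \/
  (st u = 1 /\ st u' = 1 /\ sb u = sb u') \/
  (sa u = sa u' /\ sb u = sb u' /\ st u = st u') \/
  (sa u = sb u' /\ sb u = sa u' /\ st u = 1 - st u').

(* the point x of the (regular, side 1) pentagon f is the skeleton point u *)
Definition fp_at_skel (X : pcx) (f : pF X) (x : pt) (u : skel X) : Prop :=
  exists (i : 'I_5) s, 0 <= s <= 1 /\ x = side_pt i s /\
    skel_eq (Sk (pcor f i) (pcor f (ordS i)) s) u.

Definition same_fp (X : pcx) (f : pF X) (x : pt) (g : pF X) (y : pt) : Prop :=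
  (f = g /\ x = y) \/
  (exists u, skel_ok u /\ fp_at_skel f x u /\ fp_at_skel g y u).

(* piecewise linear paths in L_aff: segments inside single faces *)
Record aseg (X : pcx) := ASeg { asf : pF X; asx : pt; asy : pt }.

Fixpoint apath_from (X : pcx) (f : pF X) (x : pt) (l : list (aseg X)) (Q : skel X)
  : Prop :=
  match l with
  | nil => fp_at_skel f x Q
  | s :: l' => same_fp f x (asf s) (asx s) /\ in_pent (asx s) /\ in_pent (asy s) /\
               apath_from (asf s) (asy s) l' Q
  end.

Definition apath (X : pcx) (P : skel X) (l : list (aseg X)) (Q : skel X) : Prop :=
  match l with
  | nil => skel_eq P Q
  | s :: l' => fp_at_skel (asf s) (asx s) P /\ in_pent (asx s) /\ in_pent (asy s) /\
               apath_from (asf s) (asy s) l' Q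
  end.

Fixpoint alen (X : pcx) (l : list (aseg X)) : R :=
  match l with nil => 0 | s :: l' => edist (asx s) (asy s) + alen l' end.

(* d(P,Q) <= r  (d = infimum of lengths of paths in L_aff) *)
Definition aff_dist_le (X : pcx) (P Q : skel X) (r : R) : Prop :=
  forall eps, 0 < eps -> exists l, apath P l Q /\ alen l < r + eps.

(* paths in the 1-skeleton with unit edges *)
Record eseg (X : pcx) := ESeg { esa : pV X; esb : pV X; ess : R; est : R }.

Fixpoint spath (X : pcx) (cur : skel X) (l : list (eseg X)) (Q : skel X) : Prop :=
  match l with
  | nil => skel_eq cur Q
  | e :: l' => adj (esa e) (esb e) /\ 0 <= ess e <= 1 /\ 0 <= est e <= 1 /\
               skel_eq cur (Sk (esa e) (esb e) (ess e)) /\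
               spath (Sk (esa e) (esb e) (est e)) l' Q
  end.

Fixpoint slen (X : pcx) (l : list (eseg X)) : R :=
  match l with nil => 0 | e :: l' => Rabs (est e - ess e) + slen l' end.

Definition skel_dist_le (X : pcx) (P Q : skel X) (r : R) : Prop :=
  forall eps, 0 < eps -> exists l, spath P l Q /\ slen l < r + eps.

(* the vertex v, as a point of the 1-skeleton, via an edge vw *)
Definition vpt (X : pcx) (v w : pV X) : skel X := Sk v w 0.

Definition ball_d (X : pcx) (v w : pV X) (r : R) : skel X -> Prop :=
  fun u => skel_ok u /\ aff_dist_le (vpt v w) u r.
Definition ball_d' (X : pcx) (v w : pV X) (r : R) : skel X -> Prop :=
  fun u => skel_ok u /\ skel_dist_le (vpt v w) u r.

(* Main.v *)
Require Import Defs.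
From mathcomp Require Import all_boot.
From Stdlib Require Import Reals Lra Psatz Rgeom.
Open Scope R_scope.
Set Implicit Arguments.
Unset Strict Implicit.

Definition ca := cos (2 * PI / 5).
Definition sa5 := sin (2 * PI / 5).
Definition rotp (p : pt) : pt := (ca * fst p - sa5 * snd p, sa5 * fst p + ca * snd p).

Lemma pvert_S (k : 'I_5) : pvert (ordS k) = rotp (pvert k).
Proof.
  have Hc : forall th, cos (th + 2*PI/5) = cos th * ca - sin th * sa5.
    by move=> th; rewrite cos_plus.
  have Hs : forall th, sin (th + 2*PI/5) = sin th * ca + cos th * sa5.
    by move=> th; rewrite sin_plus.
  case: k => [[|[|[|[|[|m]]]]] Hm] //;
  rewrite /pvert /rotp /=;
  match goal with |- (_ * cos ?A, _) = (_ * (_ * cos ?B) - _, _) =>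
    first [ replace A with (B + 2*PI/5) by field; rewrite Hc Hs; f_equal; ring
          | idtac ] end.
  have E : 2 * PI * (1+1+1+1) / 5 + 2*PI/5 = 2 * PI by field.
  have E0 : 2 * PI * 0 / 5 = 0 by field.
  rewrite E0 cos_0 sin_0.
  have := Hc (2 * PI * (1+1+1+1) / 5); have := Hs (2 * PI * (1+1+1+1) / 5).
  rewrite E cos_2PI sin_2PI => H1 H2.
  f_equal; [rewrite {1}H2 | rewrite {1}H1]; ring.
Qed.

Definition vsub (p q : pt) : pt := (fst p - fst q, snd p - snd q).
Definition dot (p q : pt) : R := fst p * fst q + snd p * snd q.
Definition dv (k : 'I_5) : pt := vsub (pvert (ordS k)) (pvert k).

Lemma ca_sa : ca ^ 2 + sa5 ^ 2 = 1.
Proof. rewrite /ca /sa5. have := sin2_cos2 (2*PI/5). rewrite /Rsqr. lra. Qed.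

Lemma ca_ge0 : 0 <= ca.
Proof. rewrite /ca. apply: cos_ge_0; have := PI_RGT_0; lra. Qed.

Lemma dv_S k : dv (ordS k) = rotp (dv k).
Proof. rewrite /dv !pvert_S /rotp /vsub /=. f_equal; ring. Qed.

Lemma dot_rot u : dot u (rotp u) = ca * dot u u.
Proof. rewrite /dot /rotp /=. ring. Qed.

Lemma N_rot u : dot (rotp u) (rotp u) = dot u u.
Proof. rewrite /dot /rotp /=. have := ca_sa. nra. Qed.

Lemma dv0 : dot (dv ord0) (dv ord0) = 1.
Proof.
  rewrite /dv pvert_S /pvert /rotp /vsub /dot /=.
  replace (2 * PI * 0 / 5) with 0 by field.
  rewrite cos_0 sin_0 /ca /sa5 /circ_rad.
  replace (2 * PI / 5) with (2 * (PI / 5)) by field.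
  have hs : 0 < sin (PI / 5) by apply: sin_gt_0; have := PI_RGT_0; lra.
  have h1 := sin2_cos2 (2 * (PI / 5)). rewrite /Rsqr in h1.
  rewrite cos_2a_sin in h1 *.
  set s := sin (PI / 5) in hs h1 *. set S := sin (2 * (PI / 5)) in h1 *.
  have hS : S * S = 4*s*s - 4*s*s*s*s by nra.
  transitivity (s*s + S*S/(4*s*s)); first by field; lra.
  rewrite hS. field. lra.
Qed.

Lemma dvN k : dot (dv k) (dv k) = 1.
Proof.
  case: k => m Hm.
  elim: m Hm => [|m IH] Hm.
    by rewrite -dv0; congr (dot (dv _) (dv _)); apply/val_inj.
  have Hm' : leq m.+1 5 by apply: ltnW.
  have -> : Ordinal Hm = ordS (Ordinal Hm').
    apply/val_inj => /=. by rewrite modn_small.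
  by rewrite dv_S N_rot IH.
Qed.

Lemma dv_dotS k : dot (dv k) (dv (ordS k)) = ca.
Proof. by rewrite dv_S dot_rot dvN Rmult_1_r. Qed.

Lemma side_pt_eq i s : side_pt i s = (fst (pvert i) + s * fst (dv i), snd (pvert i) + s * snd (dv i)).
Proof. rewrite /side_pt /dv /vsub /=; f_equal; ring. Qed.

Lemma pvert_Sd i : pvert (ordS i) = (fst (pvert i) + fst (dv i), snd (pvert i) + snd (dv i)).
Proof. rewrite /dv /vsub. destruct (pvert (ordS i)) as [a b], (pvert i) as [c d]. cbn [fst snd]. f_equal; ring. Qed.

Lemma sqrt_ge r z : 0 <= r -> r ^ 2 <= z -> r <= sqrt z.
Proof. move=> h1 h2. rewrite -(sqrt_pow2 r h1). exact: sqrt_le_1_alt. Qed.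

Lemma edist_same i s t : Rabs (t - s) <= edist (side_pt i s) (side_pt i t).
Proof.
  apply: sqrt_ge; first exact: Rabs_pos.
  rewrite pow2_abs.
  have := dvN i. rewrite !side_pt_eq /dot. cbn [fst snd]. move=> h.
  set p := (dv i).1 in h *; set q := (dv i).2 in h *.
  set P := (pvert i).1; set Q := (pvert i).2.
  have -> : (P + s * p - (P + t * p)) ^ 2 + (Q + s * q - (Q + t * q)) ^ 2 = (t-s)^2*(p*p+q*q) by ring.
  rewrite h; lra.
Qed.

Lemma edist_same_eq i s t : edist (side_pt i s) (side_pt i t) = Rabs (t - s).
Proof.
  rewrite /edist -sqrt_Rsqr_abs /Rsqr. f_equal.
  have := dvN i. rewrite !side_pt_eq /dot. cbn [fst snd]. move=> h.
  set p := (dv i).1 in h *; set q := (dv i).2 in h *.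
  set P := (pvert i).1; set Q := (pvert i).2.
  have -> : (P + s * p - (P + t * p)) ^ 2 + (Q + s * q - (Q + t * q)) ^ 2 = (t-s)*(t-s)*(p*p+q*q) by ring.
  rewrite h; ring.
Qed.

Lemma edist_adj i s t : 0 <= s <= 1 -> 0 <= t <= 1 ->
  ((1 - s) + t) / 3 <= edist (side_pt i s) (side_pt (ordS i) t).
Proof.
  move=> hs ht. apply: sqrt_ge; first lra.
  have h1 := dvN i. have h2 := dvN (ordS i). have h3 := dv_dotS i. have h0 := ca_ge0.
  rewrite !side_pt_eq pvert_Sd /=.
  move: h1 h2 h3; rewrite /dot.
  set p := fst (dv i); set q := snd (dv i); set p' := fst (dv (ordS i)); set q' := snd (dv (ordS i)).
  move=> h1 h2 h3.
  set a := 1 - s.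
  have -> : (fst (pvert i) + s * p - (fst (pvert i) + p + t * p')) = - (a * p + t * p') by rewrite /a; ring.
  have -> : (snd (pvert i) + s * q - (snd (pvert i) + q + t * q')) = - (a * q + t * q') by rewrite /a; ring.
  have E : (- (a * p + t * p')) ^ 2 + (- (a * q + t * q')) ^ 2 = a*a*(p*p+q*q) + t*t*(p'*p'+q'*q') + 2*a*t*(p*p'+q*q') by ring.
  rewrite E h1 h2 h3.
  have ha : 0 <= a by rewrite /a; lra.
  have := Rmult_le_pos _ _ (Rmult_le_pos _ _ ha (proj1 ht)) h0. clearbody a. clear E. move=> hh. nra.
Qed.

Lemma edist_far i s t : 0 <= s <= 1 -> 0 <= t <= 1 ->
  1 <= edist (side_pt i s) (side_pt (ordS (ordS i)) t).
Proof.
  move=> hs ht. apply: sqrt_ge; first lra.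
  have h1 := dvN (ordS i). have h3 := dv_dotS i. have h4 := dv_dotS (ordS i). have h0 := ca_ge0.
  rewrite !side_pt_eq !pvert_Sd /=.
  move: h1 h3 h4; rewrite /dot.
  set p := fst (dv i); set q := snd (dv i); set p' := fst (dv (ordS i)); set q' := snd (dv (ordS i)).
  set p'' := fst (dv (ordS (ordS i))); set q'' := snd (dv (ordS (ordS i))).
  move=> h1 h3 h4.
  set a := 1 - s.
  have -> : (fst (pvert i) + s * p - (fst (pvert i) + p + p' + t * p'')) = - (a * p + p' + t * p'') by rewrite /a; ring.
  have -> : (snd (pvert i) + s * q - (snd (pvert i) + q + q' + t * q'')) = - (a * q + q' + t * q'') by rewrite /a; ring.
  set X := a * p + p' + t * p''. set Y := a * q + q' + t * q''.
  have hd : X * p' + Y * q' = a * (p*p'+q*q') + (p'*p'+q'*q') + t * (p'*p''+q'*q'') by rewrite /X /Y; ring.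
  rewrite h1 h3 h4 in hd.
  have ha : 0 <= a by rewrite /a; lra.
  clearbody a X Y p q p' q' p'' q''.
  have hge : 1 <= X * p' + Y * q'.
    rewrite hd. have := Rmult_le_pos _ _ ha h0. have := Rmult_le_pos _ _ (proj1 ht) h0. lra.
  have CS : (X * p' + Y * q') ^ 2 <= (X^2 + Y^2) * (p'*p'+q'*q').
    have := pow2_ge_0 (X * q' - Y * p'). have -> : (X^2 + Y^2) * (p'*p'+q'*q') = (X * p' + Y * q') ^ 2 + (X * q' - Y * p')^2 by ring. lra.
  rewrite h1 in CS. have : 1 <= (X * p' + Y * q') ^ 2 by nra. lra.
Qed.

Section S.
Variable X : pcx.

Lemma se_refl (u : skel X) : skel_eq u u.
Proof. rewrite /skel_eq; right; right; right; right; left; auto. Qed.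

Lemma se_sym (u u' : skel X) : skel_eq u u' -> skel_eq u' u.
Proof.
  case: u u' => [a b t] [a' b' t']; rewrite /skel_eq /=.
  intuition (subst; auto 10).
  right; right; right; right; right. repeat split; auto; lra.
Qed.

Ltac pick := repeat split; first [reflexivity | lra | congruence | assumption].
Ltac disj := first [ left; solve [pick] | right; left; solve [pick]
  | right; right; left; solve [pick] | right; right; right; left; solve [pick]
  | right; right; right; right; left; solve [pick]
  | right; right; right; right; right; solve [pick] ].

Lemma se_trans (u u' u'' : skel X) : skel_eq u u' -> skel_eq u' u'' -> skel_eq u u''.
Proof.
  case: u u' u'' => [a b t] [a' b' t'] [a'' b'' t'']; rewrite /skel_eq /=.
  move=> H1 H2.
  repeat match goal with H : _ \/ _ |- _ => destruct H | H : _ /\ _ |- _ => destruct H end;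
  subst; disj.
Qed.

Lemma spath_start (A B C : skel X) l : skel_eq A B -> spath B l C -> spath A l C.
Proof.
  case: l => [|e l] /=; first exact: se_trans.
  move=> h [h1 [h2 [h3 [h4 h5]]]]; repeat split => //; exact: se_trans h h4.
Qed.

Lemma spath_cat (A B B' C : skel X) l1 l2 : spath A l1 B -> skel_eq B B' -> spath B' l2 C ->
  spath A (l1 ++ l2) C.
Proof.
  elim: l1 A => [|e l1 IH] A /=.
    move=> h1 h2 h3; apply: spath_start h3; exact: se_trans h1 h2.
  move=> [h1 [h2 [h3 [h4 h5]]]] h6 h7; repeat split => //; exact: IH h5 h6 h7.
Qed.

Lemma slen_cat (l1 l2 : list (eseg X)) : slen (l1 ++ l2) = slen l1 + slen l2.
Proof. elim: l1 => [|e l IH] /=; [ring | rewrite IH; ring]. Qed.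

Definition sreach (A B : skel X) (r : R) := exists l, spath A l B /\ slen l <= r.

Lemma sreach_cat A B B' C r1 r2 : sreach A B r1 -> skel_eq B B' -> sreach B' C r2 ->
  sreach A C (r1 + r2).
Proof.
  move=> [l1 [h1 h1']] h [l2 [h2 h2']]; exists (l1 ++ l2); split.
    exact: spath_cat h1 h h2.
  rewrite slen_cat; lra.
Qed.

Lemma sreach_mono A B r r' : sreach A B r -> r <= r' -> sreach A B r'.
Proof. move=> [l [h1 h2]] h; exists l; split => //; lra. Qed.

Lemma sreach_eq A B : skel_eq A B -> sreach A B 0.
Proof. move=> h; exists nil; split => //=; lra. Qed.

Lemma adj_side (f : pF X) k : adj (pcor f k) (pcor f (ordS k)).
Proof. exists f, k; left; split; reflexivity. Qed.

Definition skf (f : pF X) k s := Sk (pcor f k) (pcor f (ordS k)) s.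
Definition sg (f : pF X) k s t := ESeg (pcor f k) (pcor f (ordS k)) s t.

End S.

Lemma edist_sym x y : edist x y = edist y x.
Proof. rewrite /edist; f_equal; ring. Qed.

Lemma edist_ge0 x y : 0 <= edist x y.
Proof. exact: sqrt_pos. Qed.

Lemma ord5_cases (i j : 'I_5) :
  j = i \/ j = ordS i \/ j = ordS (ordS i) \/ i = ordS (ordS j) \/ i = ordS j.
Proof.
  have : [|| j == i, j == ordS i, j == ordS (ordS i), i == ordS (ordS j) | i == ordS j].
    by case: i j => [[|[|[|[|[|?]]]]] ?] [[|[|[|[|[|?]]]]] ?].
  by case/or4P => [|||/orP[]] /eqP ->; auto.
Qed.

Ltac pick := repeat split; first [reflexivity | lra | congruence | assumption | apply: adj_side].
Ltac disj := first [ left; solve [pick] | right; left; solve [pick]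
  | right; right; left; solve [pick] | right; right; right; left; solve [pick]
  | right; right; right; right; left; solve [pick]
  | right; right; right; right; right; solve [pick] ].

Lemma key (X : pcx) (f : pF X) i j s t : 0 <= s <= 1 -> 0 <= t <= 1 ->
  sreach (skf f i s) (skf f j t) (3 * edist (side_pt i s) (side_pt j t)).
Proof.
  move=> hs ht.
  case: (ord5_cases i j) => [->|[->|[->|[->|->]]]].
  - exists [:: sg f i s t]; split.
      rewrite /= /skf /sg; repeat split; try apply: adj_side; try lra; disj.
    have := edist_same i s t. have := edist_ge0 (side_pt i s) (side_pt i t). rewrite /=. move=> ? ?; lra.
  - exists [:: sg f i s 1; sg f (ordS i) 0 t]; split.
      rewrite /= /skf /sg; repeat split; try apply: adj_side; try lra; disj.
    have := edist_adj i hs ht. rewrite /= Rabs_right; last lra. rewrite Rabs_right; [move=> ?; lra| lra].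
  - exists [:: sg f i s 1; sg f (ordS i) 0 1; sg f (ordS (ordS i)) 0 t]; split.
      rewrite /= /skf /sg; repeat split; try apply: adj_side; try lra; disj.
    have := edist_far i hs ht. rewrite /= Rabs_right; last lra. rewrite Rabs_right; last lra.
    rewrite Rabs_right; [move=> ?; lra| lra].
  - exists [:: sg f (ordS (ordS j)) s 0; sg f (ordS j) 1 0; sg f j 1 t]; split.
      rewrite /= /skf /sg; repeat split; try apply: adj_side; try lra; disj.
    have := edist_far j ht hs. rewrite edist_sym /= Rabs_left1; last lra. rewrite Rabs_left1; last lra.
    rewrite Rabs_left1; [move=> ?; lra| lra].
  - exists [:: sg f (ordS j) s 0; sg f j 1 t]; split.
      rewrite /= /skf /sg; repeat split; try apply: adj_side; try lra; disj.
    have := edist_adj j ht hs. rewrite edist_sym /= Rabs_left1; last lra. rewrite Rabs_left1; [move=> ?; lra| lra].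
Qed.
Lemma in_pent_side (i : 'I_5) s : 0 <= s <= 1 -> in_pent (side_pt i s).
Proof.
  move=> hs.
  exists (fun k : 'I_5 => if nat_of_ord k == nat_of_ord i then 1 - s else if nat_of_ord k == nat_of_ord (ordS i) then s else 0).
  split.
    move=> k; case: ifP => _; first lra. case: ifP => _; lra.
  rewrite /side_pt /pvert.
  rewrite !inordK //.
  case: i => [[|[|[|[|[|m]]]]] Hm] //=; split; try lra; f_equal; ring.
Qed.

Lemma edist_tri x y z : edist x z <= edist x y + edist y z.
Proof.
  have E : forall p q, edist p q = dist_euc (fst p) (snd p) (fst q) (snd q).
    by move=> p q; rewrite /edist /dist_euc /Rsqr; f_equal; ring.
  rewrite !E; exact: triangle.
Qed.

Lemma edist_0 x : edist x x = 0.
Proof.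
  rewrite /edist. replace ((fst x - fst x) ^ 2 + (snd x - snd x) ^ 2) with 0 by ring.
  exact: sqrt_0.
Qed.

Section Inv.
Variables (X : pcx) (P : skel X).

Definition Inv (f : pF X) (x : pt) (r : R) :=
  forall j t, 0 <= t <= 1 -> sreach P (skf f j t) (3 * r + 3 * edist x (side_pt j t)).

Lemma Inv_move f x y r : Inv f x r -> Inv f y (r + edist x y).
Proof.
  move=> h j t ht; apply: sreach_mono (h j t ht) _.
  have := edist_tri x y (side_pt j t). lra.
Qed.

Lemma Inv_fp g y u r : sreach P u (3 * r) -> fp_at_skel g y u -> Inv g y r.
Proof.
  move=> hu [i [s0 [hs0 [-> he]]]] j t ht.
  apply: sreach_cat hu (se_sym he) (key g i j hs0 ht).
Qed.

Lemma Inv_at f x u r : Inv f x r -> fp_at_skel f x u -> sreach P u (3 * r).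
Proof.
  move=> h [i [s0 [hs0 [ex he]]]].
  have := h i s0 hs0. rewrite -ex edist_0 => h1.
  have := sreach_cat h1 he (sreach_eq (se_refl u)).
  by rewrite !Rmult_0_r !Rplus_0_r.
Qed.

Lemma main_from l : forall f x r Q, Inv f x r -> apath_from f x l Q ->
  sreach P Q (3 * (r + alen l)).
Proof.
  elim: l => [|s l IH] f x r Q h /=.
    move=> hq; rewrite Rplus_0_r; exact: Inv_at h hq.
  move=> [hs [_ [_ hl]]].
  have hI : Inv (asf s) (asx s) r.
    case: hs => [[ef ex]|[u [_ [h1 h2]]]].
      by rewrite -ef -ex.
    exact: Inv_fp (Inv_at h h1) h2.
  have := IH _ _ _ Q (@Inv_move (asf s) (asx s) (asy s) r hI) hl.
  by rewrite Rplus_assoc.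
Qed.

Lemma main_path l Q : apath P l Q -> sreach P Q (3 * alen l).
Proof.
  case: l => [|s l] /=.
    move=> h; rewrite Rmult_0_r; exact: sreach_eq.
  move=> [h1 [_ [_ hl]]].
  have hI : Inv (asf s) (asx s) 0.
    apply: Inv_fp h1. rewrite Rmult_0_r; exact: sreach_eq (se_refl P).
  have := main_from (@Inv_move (asf s) (asx s) (asy s) 0 hI) hl.
  by rewrite Rplus_0_l.
Qed.

End Inv.

Lemma orient (X : pcx) (a b : pV X) s t : adj a b -> 0 <= s <= 1 -> 0 <= t <= 1 ->
  exists g j s' t', 0 <= s' <= 1 /\ 0 <= t' <= 1 /\
    skel_eq (skf g j s') (Sk a b s) /\ skel_eq (skf g j t') (Sk a b t) /\
    Rabs (t' - s') = Rabs (t - s).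
Proof.
  move=> [g [j [[e1 e2]|[e1 e2]]]] hs ht.
    exists g, j, s, t; rewrite /skf e1 e2; repeat split; try lra; exact: se_refl.
  exists g, j, (1 - s), (1 - t); rewrite /skf e1 e2; repeat split; try lra.
  - rewrite /skel_eq /=; right; right; right; right; right; repeat split; lra.
  - rewrite /skel_eq /=; right; right; right; right; right; repeat split; lra.
  - replace (1 - t - (1 - s)) with (- (t - s)) by ring; exact: Rabs_Ropp.
Qed.

Lemma conv_from (X : pcx) (l : list (eseg X)) : forall f x (cur Q : skel X),
  skel_ok cur -> fp_at_skel f x cur -> spath cur l Q ->
  exists al, apath_from f x al Q /\ alen al = slen l.
Proof.
  elim: l => [|e l IH] f x cur Q hok hfp /=.
    move=> h; exists nil; split => //=.
    case: hfp => [i [s0 [hs0 [ex he]]]]; exists i, s0; repeat split => //; exact: se_trans he h.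
  move=> [hab [hs [ht [he hl]]]].
  have [g [j [s' [t' [hs' [ht' [e1 [e2 ea]]]]]]]] := orient hab hs ht.
  have hok' : skel_ok (Sk (esa e) (esb e) (est e)) by split.
  have hfp' : fp_at_skel g (side_pt j t') (Sk (esa e) (esb e) (est e)).
    by exists j, t'; repeat split => //.
  have [al [h1 h2]] := IH _ _ _ Q hok' hfp' hl.
  exists (ASeg g (side_pt j s') (side_pt j t') :: al); split.
    rewrite /=; split; last split; [| exact: in_pent_side | split; [exact: in_pent_side | exact: h1]].
    right; exists cur; split => //; split => //.
    exists j, s'; repeat split => //. exact: se_trans e1 (se_sym he).
  by rewrite /= h2 edist_same_eq ea.
Qed.

Lemma conv (X : pcx) (l : list (eseg X)) (P Q : skel X) : spath P l Q ->
  exists al, apath P al Q /\ alen al = slen l.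
Proof.
  case: l => [|e l] /=.
    by move=> h; exists nil.
  move=> [hab [hs [ht [he hl]]]].
  have [g [j [s' [t' [hs' [ht' [e1 [e2 ea]]]]]]]] := orient hab hs ht.
  have hok' : skel_ok (Sk (esa e) (esb e) (est e)) by split.
  have hfp' : fp_at_skel g (side_pt j t') (Sk (esa e) (esb e) (est e)).
    by exists j, t'; repeat split => //.
  have [al [h1 h2]] := conv_from hok' hfp' hl.
  exists (ASeg g (side_pt j s') (side_pt j t') :: al); split.
    rewrite /=; split; last split; [| exact: in_pent_side | split; [exact: in_pent_side | exact: h1]].
    exists j, s'; repeat split => //. exact: se_trans e1 (se_sym he).
  by rewrite /= h2 edist_same_eq ea.
Qed.

Theorem corollary2p3 (L : pcx) (HL : comb_tiling L) (Hloc : loc_iso_K L)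
  (v w : pV L) (Hvw : adj v w) (n : nat) (Hn : (0 < n)%nat) :
  (forall u, ball_d' v w (INR n) u -> ball_d v w (INR n) u) /\
  (forall u, ball_d v w (INR n) u -> ball_d' v w (3 * INR n) u).
Proof.
  split => u [hok hd]; split => // eps heps.
    have [l [h1 h2]] := hd eps heps.
    have [al [h3 h4]] := conv h1.
    exists al; split => //; lra.
  have heps' : 0 < eps / 3 by lra.
  have [al [h1 h2]] := hd _ heps'.
  have [l [h3 h4]] := main_path h1.
  exists l; split => //; lra.
Qed.
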